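(* For a $d$-regular simple graph on $n$ vertices quantised with equi-transmitting scattering matrices, for every $f\in G_1$ and every integer $t\ge0$, $$\psi\big(\hat C^t\tilde\varphi(f)\big)=M^tf.$$
   Context: For directed bond $b$, $o(b),t(b)$ are origin and terminus, $\bar b$ its reversal. For equi-transmitting quantisation, $M$ is the $2B\times2B$ matrix with $M_{bc}=\frac1{d-1}$ if $t(b)=o(c)$ and $c\ne\bar b$, and $0$ otherwise. $e_v\in\mathbb{C}^{2B}$ has component $1$ on each directed bond with origin $v$, $0$ elsewhere; $\tilde e_v$ has component $1$ on each directed bond with terminus $v$, $0$ elsewhere. $G_1=\mathrm{span}\{e_1,\dots,e_n\}$. $\tilde\varphi:G_1\to\mathbb{C}^{2n}$ maps $\sum_va_ve_v$ to $(a_1,\dots,a_n,0,\dots,0)^T$. $\psi:\mathbb{C}^{2n}\to\mathbb{C}^{2B}$ is $\psi(\mathbf a,\mathbf b)=\sum_va_ve_v+\sum_vb_v\tilde e_v$. $C$ is the $n\times n$ connectivity (adjacency) matrix and $\hat C=\begin{pmatrix}0&-\frac1{d-1}I_n\\ I_n&\frac1{d-1}C\end{pmatrix}$. *)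

(* Defs.v *)
From HB Require Import structures.
From mathcomp Require Import all_boot all_order all_algebra all_field.
Set Implicit Arguments. Unset Strict Implicit. Unset Printing Implicit Defensive.
Import Order.TTheory GRing.Theory Num.Theory.
Local Open Scope ring_scope.

Definition simple_graph (n : nat) (adj : rel 'I_n) : Prop :=
  (forall u v, adj u v = adj v u) /\ (forall v, ~~ adj v v).

Definition regular (n d : nat) (adj : rel 'I_n) : Prop :=
  forall v, #|[set w | adj v w]| = d.

Definition dbond (n : nat) (adj : rel 'I_n) : finType :=
  {p : 'I_n * 'I_n | adj p.1 p.2}.

Section Graph.
Variables (n : nat) (adj : rel 'I_n).
Local Notation B2 := #|dbond adj|.

Definition borig (b : dbond adj) : 'I_n := (val b).1.
Definition bterm (b : dbond adj) : 'I_n := (val b).2.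
Definition is_rev (b c : dbond adj) : bool :=
  (borig c == bterm b) && (bterm c == borig b).

Definition Mmat (d : nat) : 'M[algC]_B2 :=
  \matrix_(i, j)
    (if (bterm (enum_val i) == borig (enum_val j)) && ~~ is_rev (enum_val i) (enum_val j)
     then (d.-1)%:R^-1 else 0).

Definition evec (v : 'I_n) : 'cV[algC]_B2 :=
  \col_i (borig (enum_val i) == v)%:R.
Definition etvec (v : 'I_n) : 'cV[algC]_B2 :=
  \col_i (bterm (enum_val i) == v)%:R.

Definition G1elt (a : 'cV[algC]_n) : 'cV[algC]_B2 := \sum_v a v 0 *: evec v.

Definition tphi (a : 'cV[algC]_n) : 'cV[algC]_(n + n) := col_mx a 0.

Definition psi (x : 'cV[algC]_(n + n)) : 'cV[algC]_B2 :=
  \sum_v (usubmx x) v 0 *: evec v + \sum_v (dsubmx x) v 0 *: etvec v.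

Definition Cmat : 'M[algC]_n := \matrix_(i, j) (adj i j)%:R.

Definition Chat (d : nat) : 'M[algC]_(n + n) :=
  block_mx 0 (- (d.-1)%:R^-1 *: 1%:M) 1%:M ((d.-1)%:R^-1 *: Cmat).
End Graph.

(* Main.v *)
Require Import Defs.
From HB Require Import structures.
From mathcomp Require Import all_boot all_order all_algebra all_field.
From mathcomp Require Import ring.
Import GRing.Theory Num.Theory.
Local Open Scope ring_scope.

Set Implicit Arguments.
Section Aux.
Variables (n : nat) (adj : rel 'I_n).

Lemma sum_enum (F : dbond adj -> algC) :
  \sum_(j < #|dbond adj|) F (enum_val j) = \sum_b F b.
Proof. by rewrite -(big_enum_val (A := predT)). Qed.

Lemma sum_ind (f : 'I_n -> algC) (u : 'I_n) :
  \sum_v f v * (u == v)%:R = f u.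
Proof.
rewrite (bigD1 u) //= eqxx mulr1 big1 ?addr0 // => v /negPf.
by rewrite eq_sym => ->; rewrite mulr0.
Qed.

Lemma psiE (x : 'cV[algC]_(n + n)) (i : 'I_#|dbond adj|) :
  psi adj x i 0 = usubmx x (borig (enum_val i)) 0 + dsubmx x (bterm (enum_val i)) 0.
Proof.
rewrite -(sum_ind (fun v => usubmx x v 0)) -(sum_ind (fun v => dsubmx x v 0)).
rewrite /psi [in LHS]mxE !summxE.
congr (_ + _); apply: eq_bigr => v _; rewrite [LHS]mxE [in LHS]mxE;
  by congr (_ * _); rewrite !mxE.
Qed.

Lemma L1 (G : 'I_n -> 'I_n -> algC) u w :
  \sum_(b : dbond adj | (borig b == u) && (bterm b == w)) G (borig b) (bterm b)
  = (adj u w)%:R * G u w.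
Proof.
case H: (adj u w).
  rewrite (big_pred1 (exist _ (u, w) H : dbond adj)) ?mul1r //.
rewrite big_pred0 ?mul0r // => b.
apply/negP => /andP [/eqP E1 /eqP E2].
by move: (valP b); rewrite -/(borig b) -/(bterm b) E1 E2 H.
Qed.

Lemma L2 (g : 'I_n -> algC) u :
  \sum_(b : dbond adj | borig b == u) g (bterm b) = \sum_w (adj u w)%:R * g w.
Proof.
rewrite (partition_big (bterm (adj:=adj)) xpredT) //.
apply: eq_bigr => w _.
rewrite (L1 (fun _ w => g w)).
done.
Qed.
End Aux.

Lemma degE n (adj : rel 'I_n) d (Hreg : regular d adj) u :
  \sum_w ((adj u w)%:R : algC) = d%:R.
Proof.
rewrite -natr_sum; congr (_%:R).
transitivity (\sum_(w | adj u w) 1)%N.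
  by rewrite [RHS]big_mkcond; apply: eq_bigr => w _; case: (adj u w).
rewrite sum1_card -(Hreg u); apply: eq_card => w; by rewrite inE.
Qed.

Lemma step n d (adj : rel 'I_n)
  (Hsimple : simple_graph adj) (Hreg : regular d adj) (Hd : (2 <= d)%N)
  (x : 'cV[algC]_(n + n)) :
  Mmat adj d *m psi adj x = psi adj (Chat adj d *m x).
Proof.
set k := ((d.-1)%:R : algC)^-1.
set X := usubmx x. set Y := dsubmx x.
have CE : Chat adj d *m x = col_mx (- k *: Y) (X + k *: (Cmat adj *m Y)).
  rewrite -{1}(vsubmxK x) /Chat mul_block_col mul0mx add0r mul1mx.
  by rewrite scalemx1 mul_scalar_mx -scalemxAl.
apply/matrixP => i j; rewrite (ord1 j) {j}.
rewrite mxE [RHS]psiE CE col_mxKu col_mxKd.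
under eq_bigr do rewrite psiE -/X -/Y.
clearbody X Y.
rewrite !mxE.
under eq_bigr do rewrite !mxE.
set bi := enum_val i.
under [in RHS]eq_bigr do rewrite mxE.
rewrite (@sum_enum _ _ (fun b => (if (bterm bi == borig b) && ~~ is_rev bi b then k else 0) * (X (borig b) 0 + Y (bterm b) 0))).
have ->: \sum_b (if (bterm bi == borig b) && ~~ is_rev bi b then k else 0) * (X (borig b) 0 + Y (bterm b) 0)
   = k * \sum_(b : dbond adj | (borig b == bterm bi) && ~~ is_rev bi b) (X (borig b) 0 + Y (bterm b) 0).
  rewrite mulr_sumr [RHS]big_mkcond; apply: eq_bigr => b _.
  by rewrite eq_sym; case: ifP => _; rewrite ?mul0r.
have Hrev : \sum_(b : dbond adj | (borig b == bterm bi) && is_rev bi b) (X (borig b) 0 + Y (bterm b) 0)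
    = X (bterm bi) 0 + Y (borig bi) 0.
  rewrite (eq_bigl (fun b => (borig b == bterm bi) && (bterm b == borig bi))); last first.
    by move=> b; rewrite /is_rev andbA andbb.
  rewrite (@L1 _ _ (fun u w => X u 0 + Y w 0)).
  have -> : adj (bterm bi) (borig bi) by rewrite Hsimple.1; exact: (valP bi).
  by rewrite mul1r.
have Hall : \sum_(b : dbond adj | borig b == bterm bi) (X (borig b) 0 + Y (bterm b) 0)
    = X (bterm bi) 0 * d%:R + \sum_w (adj (bterm bi) w)%:R * Y w 0.
  under eq_bigr => b /eqP Hb do rewrite Hb.
  rewrite (@L2 _ _ (fun w => X (bterm bi) 0 + Y w 0)).
  rewrite -(degE Hreg (bterm bi)) mulr_sumr -big_split /=.
  by apply: eq_bigr => w _; rewrite mulrDr mulrC.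
have Hsub : \sum_(b : dbond adj | (borig b == bterm bi) && ~~ is_rev bi b) (X (borig b) 0 + Y (bterm b) 0)
    = X (bterm bi) 0 * d%:R + \sum_w (adj (bterm bi) w)%:R * Y w 0 - (X (bterm bi) 0 + Y (borig bi) 0).
  by rewrite -Hall [in RHS](bigID (is_rev bi)) /= Hrev; ring.
rewrite Hsub.
have dE : (d%:R : algC) = (d.-1)%:R + 1 by rewrite natr1 prednK // ltnW.
have hm : ((d.-1)%:R : algC) != 0 by rewrite pnatr_eq0 -lt0n -ltnS prednK // ltnW.
rewrite dE /k.
set S := \sum_w _.

field.
exact: hm.
Qed.

Theorem proposition7 (n d : nat) (adj : rel 'I_n)
  (Hsimple : simple_graph adj) (Hreg : regular d adj) (Hd : (2 <= d)%N)
  (a : 'cV[algC]_n) (t : nat) :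
  psi adj (Chat adj d ^+ t *m tphi a) = Mmat adj d ^+ t *m G1elt adj a.
Proof.
elim: t => [|t IH].
  rewrite !expr0 !mul1mx /psi /tphi /G1elt col_mxKu col_mxKd.
  by rewrite [X in _ + X = _]big1 ?addr0 // => v _; rewrite mxE scale0r.
by rewrite !exprS -!mulmxE -!mulmxA -IH step.
Qed.
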